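(* Let $G$ be an undirected graph (a digraph with symmetric edge relation, loops allowed). (i) If every connected component of $G$ is either trivial or a complete graph with loops, then $\mathbb{A}(G)$ satisfies every bracketing identity. (ii) If every connected component of $G$ is either trivial, a complete graph with loops, or a complete bipartite graph, and the last case occurs at least once, then $\mathbb{A}(G)$ satisfies a nontrivial bracketing identity $t\approx t'$ ($t,t'\in B_n$, $t\ne t'$) if and only if $M_{t,t'}$ is even. (iii) Otherwise $\mathbb{A}(G)$ satisfies no nontrivial bracketing identity.
   Context: A connected component is trivial if it is a single vertex without a loop. A complete graph with loops on a vertex set $K$ has edge set $K\times K$; a complete bipartite graph on $K$ has $K=A\cup B$ with $A,B$ nonempty and disjoint and edge set $(A\times B)\cup(B\times A)$. The graph algebra $\mathbb{A}(G)$ is the groupoid on $V\cup\{\infty\}$ with $xy=x$ if $x,y\in V$ and $(x,y)\in E$, and $xy=\infty$ otherwise; it satisfies $t\approx t'$ if $t,t'$ induce the same term operation. $B_n$ is the set of binary terms in which $x_1,\dots,x_n$ each occur once in this order. For $t\in B_n$, the rooted tree $G(t)$ is defined recursively: $G(x_i)$ is the single vertex $x_i$; $G(t_1t_2)$ is $G(t_1)\cup G(t_2)$ plus an edge from the leftmost variable of $t_1$ to the leftmost variable of $t_2$; root $x_1$. With $T=G(t)$, $T'=G(t')$ and $d_T(x)$ the depth of $x$ in $T$, $M_{t,t'}=\gcd\{|d_T(x)-d_{T'}(x)|:x\in\{x_1,\dots,x_n\}\}$. *)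

(* Defs.v *)
From mathcomp Require Import all_boot.
From Stdlib Require Import Relations.Relation_Operators.
Set Implicit Arguments. Unset Strict Implicit. Unset Printing Implicit Defensive.

(* The graph algebra A(G) on V ∪ {∞}: represented as option V, None = ∞. *)
Definition gmul (V : Type) (E : V -> V -> bool) (x y : option V) : option V :=
  match x, y with
  | Some a, Some b => if E a b then Some a else None
  | _, _ => None
  end.

(* Bracketings: binary trees of shape; a term in B_n is a shape with n leaves,
   the leaves being labelled x_1, ..., x_n from left to right (0-based here). *)
Inductive bterm : Type := BLeaf | BNode of bterm & bterm.

Fixpoint leaves (t : bterm) : nat :=
  match t with BLeaf => 1 | BNode l r => leaves l + leaves r end.

Fixpoint teval (V : Type) (E : V -> V -> bool) (t : bterm) (k : nat)
    (a : nat -> option V) : option V :=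
  match t with
  | BLeaf => a k
  | BNode l r => gmul E (teval E l k a) (teval E r (k + leaves l) a)
  end.

Definition satisfies (V : Type) (E : V -> V -> bool) (t t' : bterm) : Prop :=
  forall a : nat -> option V, teval E t 0 a = teval E t' 0 a.

(* Depth of variable x_{i+1} in the rooted tree G(t) (root = leftmost variable);
   in G(t1 t2) the root of G(t2) is attached as child of the root of G(t1). *)
Fixpoint depth (t : bterm) (i : nat) : nat :=
  match t with
  | BLeaf => 0
  | BNode l r => if i < leaves l then depth l i else (depth r (i - leaves l)).+1
  end.

Definition natdist (a b : nat) : nat := (a - b) + (b - a).

Definition Mtt (n : nat) (t t' : bterm) : nat :=
  \big[gcdn/0]_(i < n) natdist (depth t i) (depth t' i).

Definition comp (V : Type) (E : V -> V -> bool) (v : V) : V -> Prop :=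
  fun w => clos_refl_trans V (fun x y => E x y) v w.

Definition is_trivial (V : Type) (E : V -> V -> bool) (K : V -> Prop) : Prop :=
  exists v, (forall w, K w <-> w = v) /\ ~ E v v.

Definition is_complete_loops (V : Type) (E : V -> V -> bool) (K : V -> Prop) : Prop :=
  forall x y, K x -> K y -> E x y.

Definition is_complete_bipartite (V : Type) (E : V -> V -> bool) (K : V -> Prop) : Prop :=
  exists A B : V -> Prop,
    (exists a, A a) /\ (exists b, B b) /\ (forall x, ~ (A x /\ B x)) /\
    (forall x, K x <-> A x \/ B x) /\
    (forall x y, K x -> K y -> (E x y <-> (A x /\ B y) \/ (B x /\ A y))).

Definition case_i (V : Type) (E : V -> V -> bool) : Prop :=
  forall v, is_trivial E (comp E v) \/ is_complete_loops E (comp E v).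

Definition case_ii (V : Type) (E : V -> V -> bool) : Prop :=
  (forall v, is_trivial E (comp E v) \/ is_complete_loops E (comp E v)
             \/ is_complete_bipartite E (comp E v)) /\
  (exists v, is_complete_bipartite E (comp E v)).

(* Main.v *)
Require Import Defs.
From mathcomp Require Import all_boot.
From mathcomp Require Import zify.
From Stdlib Require Import Relations.Relation_Operators Classical.
Set Implicit Arguments. Unset Strict Implicit. Unset Printing Implicit Defensive.

Fixpoint par (t : bterm) (i : nat) : nat :=
  match t with
  | BLeaf => 0
  | BNode l r => if i < leaves l then par l i
                 else if i == leaves l then 0 else leaves l + par r (i - leaves l)
  end.

Lemma leaves_gt0 t : 0 < leaves t.
Proof. elim: t => //= l IHl r IHr; lia. Qed.

Lemma par_lt t i : 0 < i < leaves t -> par t i < i.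
Proof.
elim: t i => [|l IHl r IHr] i /=; first lia.
move=> Hi; case: ifP => H1; first by apply: IHl; lia.
case: eqP => H2; first lia.
have /IHr : 0 < i - leaves l < leaves r by lia.
lia.
Qed.

Lemma depth0 t : depth t 0 = 0.
Proof. by elim: t => //= l IHl r _; rewrite leaves_gt0. Qed.

Lemma depth_l l r i : i < leaves l -> depth (BNode l r) i = depth l i.
Proof. by move=> /= ->. Qed.

Lemma depth_r l r j : depth (BNode l r) (leaves l + j) = (depth r j).+1.
Proof. by rewrite /= ltnNge leq_addr /= addKn. Qed.

Lemma par_l l r i : i < leaves l -> par (BNode l r) i = par l i.
Proof. by move=> /= ->. Qed.

Lemma par_r l r j : par (BNode l r) (leaves l + j) =
  if j == 0 then 0 else leaves l + par r j.
Proof.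
rewrite /= ltnNge leq_addr /= addKn.
by case: j => [|j]; rewrite ?addn0 ?eqxx // -{2}(addn0 (leaves l)) eqn_add2l.
Qed.

Lemma depth_par t i : 0 < i < leaves t -> depth t i = (depth t (par t i)).+1.
Proof.
elim: t i => [|l IHl r IHr] i Hi; first by simpl in Hi; lia.
simpl in Hi.
case: (ltngtP i (leaves l)) => H.
- rewrite (par_l r H) (depth_l r H) IHl ?H //; last lia.
  have Hp : par l i < i by apply: par_lt; lia.
  by rewrite (depth_l r) //; lia.
- have -> : i = leaves l + (i - leaves l) by lia.
  rewrite (par_r l r (i - leaves l)) depth_r.
  have -> : (i - leaves l == 0) = false by apply/eqP; lia.
  rewrite depth_r IHr //. lia.
- subst i. have := par_r l r 0; rewrite addn0 => ->.
  have := depth_r l r 0; rewrite addn0 => ->.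
  by rewrite /= leaves_gt0 !depth0.
Qed.

Lemma depth_pos t i : 0 < i < leaves t -> 0 < depth t i.
Proof. by move=> H; rewrite depth_par. Qed.

Lemma depth_eq0 t i : i < leaves t -> (depth t i == 0) = (i == 0).
Proof.
case: i => [|i] H; first by rewrite depth0.
by have := @depth_pos t i.+1; case: (depth t i.+1) => //; lia.
Qed.

Lemma depth_inj t t' : leaves t = leaves t' ->
  (forall i, i < leaves t -> depth t i = depth t' i) -> t = t'.
Proof.
elim: t t' => [|l IHl r IHr] [|l' r'] //.
- by move=> /= H; have := leaves_gt0 l'; have := leaves_gt0 r'; lia.
- by move=> /= H; have := leaves_gt0 l; have := leaves_gt0 r; lia.
move=> Hn Hd; simpl in Hn.
have key : forall l r l' r', leaves l < leaves l' ->
   leaves l + leaves r = leaves l' + leaves r' ->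
   (forall i, i < leaves l + leaves r -> depth (BNode l r) i = depth (BNode l' r') i) -> False.
  move=> a b a' b' Hlt Hs Hdd.
  have Hb' := leaves_gt0 b'.
  have := Hdd (leaves a') ltac:(lia).
  have := depth_r a' b' 0; rewrite addn0 depth0 => ->.
  have -> : leaves a' = leaves a + (leaves a' - leaves a) by lia.
  rewrite depth_r.
  have : 0 < depth b (leaves a' - leaves a) by apply: depth_pos; lia.
  lia.
have Hnl : leaves l = leaves l'.
  case: (ltngtP (leaves l) (leaves l')) => // H.
  - exfalso; exact: (key l r l' r' H Hn Hd).
  - exfalso; apply: (key l' r' l r H); first by rewrite Hn.
    move=> i Hi; have Hi' : i < leaves (BNode l r) by rewrite /= Hn.
    exact: (esym (Hd i Hi')).
have Hnr : leaves r = leaves r' by lia.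
have El : l = l'.
  apply: IHl => // i Hi.
  have Hi' : i < leaves (BNode l r) by rewrite /=; lia.
  have := Hd i Hi'.
  have Hi2 : i < leaves l' by rewrite -Hnl.
  by rewrite (depth_l r Hi) (depth_l r' Hi2).
have Er : r = r'.
  apply: IHr => // j Hj.
  have Hi' : leaves l + j < leaves (BNode l r) by rewrite /=; lia.
  have := Hd _ Hi'.
  by rewrite depth_r Hnl depth_r => -[].
by rewrite El Er.
Qed.

Definition goodP (V : Type) (E : V -> V -> bool) t k (a : nat -> V) : Prop :=
  forall i, 0 < i < leaves t -> E (a (k + par t i)) (a (k + i)).

Lemma teval_head V (E : V -> V -> bool) t k b x :
  teval E t k b = Some x -> b k = Some x.
Proof.
elim: t k x => [|l IHl r IHr] k x //=.
case H: (teval E l k b) => [y|] //; case: (teval E r _ b) => [z|] //=.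
by case: ifP => // _ [<-]; apply: IHl H.
Qed.

Lemma teval_none V (E : V -> V -> bool) t k b j :
  k <= j < k + leaves t -> b j = None -> teval E t k b = None.
Proof.
elim: t k => [|l IHl r IHr] k /= Hj Hb.
  by have -> : k = j by lia.
case: (ltnP j (k + leaves l)) => H.
  by rewrite (IHl k) //; lia.
rewrite (IHr (k + leaves l)) //; last lia.
by case: (teval E l k b).
Qed.

Lemma teval_ext V (E : V -> V -> bool) t k b b' :
  (forall j, k <= j < k + leaves t -> b j = b' j) -> teval E t k b = teval E t k b'.
Proof.
elim: t k => [|l IHl r IHr] k /= H; first by apply: H; lia.
rewrite (IHl k) ?(IHr (k + leaves l)) // => j Hj; apply: H; lia.
Qed.

Lemma teval_good V (E : V -> V -> bool) t k (a : nat -> V) :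
  teval E t k (fun j => Some (a j)) = Some (a k) <-> goodP E t k a.
Proof.
elim: t k => [|l IHl r IHr] k.
  by split => // _ i /=; lia.
have split_good : goodP E (BNode l r) k a <->
   [/\ goodP E l k a, goodP E r (k + leaves l) a & E (a k) (a (k + leaves l))].
  split.
  - move=> G; split.
    + move=> i Hi; have := G i ltac:(rewrite /=; lia).
      by rewrite par_l //; lia.
    + move=> j Hj; have := G (leaves l + j) ltac:(rewrite /=; lia).
      rewrite par_r; have -> : (j == 0) = false by apply/eqP; lia.
      by rewrite !addnA.
    + have := G (leaves l + 0) ltac:(have := leaves_gt0 r; have := leaves_gt0 l; rewrite /=; lia).
      by rewrite par_r eqxx !addn0.
  - move=> [Gl Gr Ee] i Hi; simpl in Hi.
    case: (ltngtP i (leaves l)) => H.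
    + by rewrite par_l //; apply: Gl; lia.
    + have -> : i = leaves l + (i - leaves l) by lia.
      rewrite par_r; have -> : (i - leaves l == 0) = false by apply/eqP; lia.
      have := Gr (i - leaves l) ltac:(lia). by rewrite !addnA.
    + subst i; have := par_r l r 0; rewrite addn0 => ->.
      by rewrite addn0.
rewrite split_good /=.
split.
- case HX: (teval E l k _) => [x|] //; case HY: (teval E r _ _) => [y|] //=.
  case: ifP => // Exy [Exk]; subst x.
  have := teval_head HY => -[Ey]; subst y.
  by split => //; [apply/IHl | apply/IHr].
- move=> [/IHl -> /IHr -> Ee] /=; by rewrite Ee.
Qed.

Lemma sat_iff V (E : V -> V -> bool) t t' n :
  leaves t = n -> leaves t' = n ->
  (satisfies E t t' <-> forall a : nat -> V, goodP E t 0 a <-> goodP E t' 0 a).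
Proof.
move=> Hn Hn'; split.
- move=> S a; rewrite -!teval_good; have := S (fun j => Some (a j)).
  by move=> ->.
- move=> G b.
  case: (classic (exists j, j < n /\ b j = None)) => [[j [Hj Hb]]|Hall].
    rewrite (@teval_none _ E t 0 b j) ?(@teval_none _ E t' 0 b j) //; lia.
  have Hs : forall j, j < n -> exists v, b j = Some v.
    move=> j Hj; case Hb: (b j) => [v|]; first by exists v.
    by exfalso; apply: Hall; exists j.
  have [v0 _] : exists v, b 0 = Some v by apply: Hs; rewrite -Hn leaves_gt0.
  pose a j := odflt v0 (b j).
  have Hab : forall j, 0 <= j < 0 + n -> b j = Some (a j).
    by move=> j Hj; have [v Hv] := Hs j ltac:(lia); rewrite /a Hv.
  rewrite (@teval_ext _ E t 0 b (fun j => Some (a j))); last by rewrite Hn.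
  rewrite (@teval_ext _ E t' 0 b (fun j => Some (a j))); last by rewrite Hn'.
  have val : forall u, leaves u = n -> teval E u 0 (fun j => Some (a j)) = Some (a 0) \/
             teval E u 0 (fun j => Some (a j)) = None.
    move=> u _; case Hu: (teval E u 0 _) => [x|]; last by right.
    by left; have := teval_head Hu => -[->].
  case: (classic (goodP E t 0 a)) => Hg.
    by have := Hg; rewrite G -!teval_good => -> ; rewrite -teval_good in Hg.
  have Hg' : ~ goodP E t' 0 a by rewrite -G.
  rewrite -teval_good in Hg; rewrite -teval_good in Hg'.
  by case: (val t Hn) => // ->; case: (val t' Hn') => // ->.
Qed.

Lemma natdist2 a b : (2 %| natdist a b) = (odd a == odd b).
Proof.
rewrite /natdist dvdn2; case: (leqP a b) => H.
  have -> : a - b = 0 by lia.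
  rewrite add0n -{2}(subnKC H) oddD.
  by case: (odd a); case: (odd (b - a)).
have -> : b - a = 0 by lia.
rewrite addn0 -{2}(subnKC (ltnW H)) oddD.
by case: (odd b); case: (odd (a - b)).
Qed.

Lemma Mtt_even n t t' : ~~ odd (Mtt n t t') <->
  forall i, i < n -> odd (depth t i) = odd (depth t' i).
Proof.
rewrite -dvdn2; split.
- move/dvdn_biggcdP => H i Hi; have := H (Ordinal Hi) isT.
  by rewrite natdist2 => /eqP.
- move=> H; apply/dvdn_biggcdP => i _.
  by rewrite natdist2 H.
Qed.

Lemma good_trans V (E : V -> V -> bool) (Esym : forall x y, E x y = E y x)
  (Etr : forall x y z, E x y -> E y z -> E x z) t (a : nat -> V) :
  goodP E t 0 a <-> (leaves t = 1 \/ forall i, i < leaves t -> E (a 0) (a i)).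
Proof.
split.
- move=> G.
  case: (ltngtP (leaves t) 1) => Hn; [by have := leaves_gt0 t; lia | right | by left].
  have E01 : E (a 0) (a 1).
    have := G 1 ltac:(lia); have := @par_lt t 1 ltac:(lia).
    by case: (par t 1).
  elim/ltn_ind => i IH Hi.
  case: i IH Hi => [|i] IH Hi.
    by apply: (Etr _ (a 1)) => //; rewrite Esym.
  have Hp := @par_lt t i.+1 ltac:(lia).
  apply: (Etr _ (a (par t i.+1))); first by apply: IH => //; lia.
  by have := G i.+1 ltac:(lia).
- move=> [H1|H] i Hi; first lia.
  have Hp := @par_lt t i Hi.
  rewrite !add0n; apply: (Etr _ (a 0)); last by apply: H; lia.
  by rewrite Esym; apply: H; lia.
Qed.

Definition Wp (V : Type) (E : V -> V -> bool) (d : nat) (x y : V) : Prop :=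
  if d == 0 then x = y else if odd d then is_true (E x y) else exists z, E x z /\ E z y.

Lemma good_Wp V (E : V -> V -> bool) (Esym : forall x y, E x y = E y x)
  (F1 : forall x y z w, E x y -> E y z -> E z w -> E x w) t (a : nat -> V) :
  goodP E t 0 a <-> (forall i, i < leaves t -> Wp E (depth t i) (a 0) (a i)).
Proof.
split.
- move=> G; elim/ltn_ind => i IH Hi.
  case: i IH Hi => [|i] IH Hi; first by rewrite depth0.
  have Hp := @par_lt t i.+1 ltac:(lia).
  have Ep := G i.+1 ltac:(lia); rewrite !add0n in Ep.
  have := IH _ Hp ltac:(lia).
  rewrite (depth_par (i := i.+1)) ?Hi //.
  rewrite /Wp /=.
  case: (depth t (par t i.+1)) => [|d] /=; first by move=> ->.
  case: (odd d) => /=.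
  + by move=> [z [H1 H2]]; apply: F1 H1 H2 Ep.
  + by move=> H; exists (a (par t i.+1)).
- move=> H i Hi.
  have Hp := @par_lt t i Hi.
  rewrite !add0n.
  have := H i ltac:(lia); have := H (par t i) ltac:(lia).
  rewrite (depth_par Hi) /Wp /=.
  case: (depth t (par t i)) => [|d] /=; first by move=> ->.
  case: (odd d) => /=.
  + move=> [z [H1 H2]] H3. by apply: (F1 _ z (a 0)) => //; rewrite Esym.
  + move=> H1 [z [H2 H3]]. by apply: (F1 _ (a 0) z) => //; rewrite Esym.
Qed.

Inductive W (V : Type) (E : V -> V -> bool) : nat -> V -> V -> Prop :=
| W0 x : W E 0 x x
| WS n x y z : E x y -> W E n y z -> W E n.+1 x z.

Lemma W1 V (E : V -> V -> bool) x y : E x y -> W E 1 x y.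
Proof. by move=> H; apply: WS H (W0 _ _). Qed.

Lemma W_eq V (E : V -> V -> bool) n m x y : n = m -> W E n x y -> W E m x y.
Proof. by move=> ->. Qed.

Lemma W_cat V (E : V -> V -> bool) m n x y z : W E m x y -> W E n y z -> W E (m + n) x z.
Proof.
elim=> [//|k u v w Euv _ IH] H.
by rewrite addSn; apply: WS Euv (IH H).
Qed.

Lemma W_inv V (E : V -> V -> bool) n x z : W E n.+1 x z -> exists y, E x y /\ W E n y z.
Proof. by move=> H; inversion H; subst; eexists; split; eauto. Qed.

Lemma W_inv0 V (E : V -> V -> bool) x z : W E 0 x z -> x = z.
Proof. by move=> H; inversion H. Qed.

Lemma W_rev V (E : V -> V -> bool) (Esym : forall x y, E x y = E y x) n x y :
  W E n x y -> W E n y x.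
Proof.
elim=> [x0|k u v w Euv _ IH]; first exact: W0.
rewrite -addn1; apply: W_cat IH (W1 _).
by rewrite Esym.
Qed.

Lemma comp_W V (E : V -> V -> bool) v w : Defs.comp E v w <-> exists n, W E n v w.
Proof.
split.
- rewrite /comp; elim=> [x y Exy|x|x y z _ [m Hm] _ [k Hk]].
  + by exists 1; apply: W1.
  + by exists 0; apply: W0.
  + by exists (m + k); apply: W_cat Hm Hk.
- move=> [n H]; elim: H => [x|k x y z Exy _ IH]; first exact: rt_refl.
  apply: rt_trans IH; exact: rt_step.
Qed.

Lemma W_bounce V (E : V -> V -> bool) (Esym : forall x y, E x y = E y x) n x y z :
  W E n x y -> E y z -> forall j, W E (n + 2 * j) x y.
Proof.
move=> H Eyz; elim=> [|j IH]; first by rewrite muln0 addn0.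
have -> : n + 2 * j.+1 = (n + 2 * j) + 2 by lia.
have Ezy : E z y by rewrite Esym.
exact: W_cat IH (WS Eyz (W1 Ezy)).
Qed.

Lemma W_loop V (E : V -> V -> bool) w : E w w -> forall j, W E j w w.
Proof. by move=> H; elim=> [|j IH]; [apply: W0 | apply: WS H IH]. Qed.

Lemma walk_inf V (E : V -> V -> bool) (Esym : forall x y, E x y = E y x) d x y :
  0 < d -> W E d x y ->
  exists g : nat -> V, (forall k, E (g k) (g k.+1)) /\ g 0 = x /\ g d = y.
Proof.
move=> Hd H; elim: H Hd => // n x' y' z Exy Wyz IH _.
case: n Wyz IH => [|n] Wyz IH.
  have Eyz := W_inv0 Wyz; subst z.
  exists (fun k => if odd k then y' else x'); split => //.
  by move=> k /=; case: (odd k) => //=; rewrite Esym.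
have [g [Hg [H0 Hn]]] := IH isT.
exists (fun k => if k is k'.+1 then g k' else x'); split => //.
by case=> [|k] //=; rewrite H0.
Qed.

Lemma walk_shift V (E : V -> V -> bool) (Esym : forall x y, E x y = E y x) (g : nat -> V) m :
  (forall k, E (g k) (g k.+1)) ->
  exists g' : nat -> V, (forall k, E (g' k) (g' k.+1)) /\ forall k, g' (m + k) = g k.
Proof.
move=> Hg.
exists (fun k => if k < m then (if odd (m - k) then g 1 else g 0) else g (k - m)).
split; last by move=> k; rewrite ltnNge leq_addr /= addKn.
move=> k; case: (ltnP k.+1 m) => H1.
  have -> : k < m by lia.
  have -> : m - k = (m - k.+1).+1 by lia.
  rewrite /=; case: (odd (m - k.+1)) => /=; last by rewrite Esym.
  exact: Hg.
case: (ltnP k m) => H2.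
  have -> : m - k = 1 by lia.
  have -> : k.+1 - m = 0 by lia.
  by rewrite /= Esym.
have -> : k.+1 - m = (k - m).+1 by lia.
exact: Hg.
Qed.

Lemma comp_step V (E : V -> V -> bool) v x y :
  Defs.comp E v x -> E x y -> Defs.comp E v y.
Proof. by move=> H Exy; apply: rt_trans H (rt_step _ _ _ _ _). Qed.

Lemma case_i_trans V (E : V -> V -> bool) : case_i E ->
  forall x y z, E x y -> E y z -> E x z.
Proof.
move=> H x y z Exy Eyz.
have Kx : Defs.comp E x x by apply: rt_refl.
have Ky := comp_step Kx Exy.
have Kz := comp_step Ky Eyz.
case: (H x) => [[v [Hv nl]]|C]; last exact: C.
have := (Hv x).1 Kx; have := (Hv y).1 Ky => ey ex; subst.
by rewrite Exy in nl.
Qed.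

Lemma case_ii_F1 V (E : V -> V -> bool) : case_ii E ->
  forall x y z w, E x y -> E y z -> E z w -> E x w.
Proof.
move=> [H _] x y z w Exy Eyz Ezw.
have Kx : Defs.comp E x x by apply: rt_refl.
have Ky := comp_step Kx Exy.
have Kz := comp_step Ky Eyz.
have Kw := comp_step Kz Ezw.
case: (H x) => [[v [Hv nl]]|[C|[A [B [_ [_ [Dis [HK HE]]]]]]]]; last 2 first.
- exact: C.
- have := (HE _ _ Kx Ky).1 Exy; have := (HE _ _ Ky Kz).1 Eyz;
  have := (HE _ _ Kz Kw).1 Ezw; have := Dis y; have := Dis z => D1 D2 H1 H2 H3.
  apply/(HE _ _ Kx Kw); tauto.
have := (Hv x).1 Kx; have := (Hv y).1 Ky => ey ex; subst.
by rewrite Exy in nl.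
Qed.

Lemma W_odd_edge V (E : V -> V -> bool)
  (F1 : forall x y z w, E x y -> E y z -> E z w -> E x w) k x y :
  W E (2 * k + 1) x y -> E x y.
Proof.
elim: k x => [|k IH] x H.
  have [y' [Exy' H0]] := W_inv H; by rewrite -(W_inv0 H0).
have H' : W E (2 * k + 1).+2 x y by apply: W_eq H; lia.
have [p [Exp H1]] := W_inv H'; have [q [Epq H2]] := W_inv H1.
exact: F1 Exp Epq (IH _ H2).
Qed.

Lemma walk_exists V (E : V -> V -> bool) (Esym : forall x y, E x y = E y x) v :
  ~ is_trivial E (Defs.comp E v) -> ~ is_complete_loops E (Defs.comp E v) ->
  ~ is_complete_bipartite E (Defs.comp E v) ->
  forall d, 1 < d -> exists x y, W E d x y /\ ~ E x y.
Proof.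
move=> nT nC nB d Hd; apply: NNPP => Hno.
have H : forall x y, W E d x y -> E x y.
  move=> x y Wxy; apply: NNPP => nE; apply: Hno; by exists x, y.
have KW : forall x, Defs.comp E v x -> exists n, W E n v x by move=> x /comp_W.
have WK : forall n x, W E n v x -> Defs.comp E v x by move=> n x Hx; apply/comp_W; exists n.
have Kxy : forall x y, Defs.comp E v x -> Defs.comp E v y -> exists n, W E n x y.
  move=> x y /KW [a Ha] /KW [b Hb]; exists (a + b); apply: W_cat Hb.
  exact: W_rev.
case: (classic (exists u, E v u)) => [[u Evu]|nonb]; last first.
  have Kv : forall w, Defs.comp E v w -> w = v.
    move=> w /KW [[|n] Hn]; first by rewrite (W_inv0 Hn).
    have [y [Evy _]] := W_inv Hn; by exfalso; apply: nonb; exists y.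
  case Evv: (E v v).
    by apply: nC => x y /Kv -> /Kv ->.
  apply: nT; exists v; split; last by rewrite Evv.
  move=> w; split; first exact: Kv.
  by move=> ->; apply: rt_refl.
have nb : forall w, Defs.comp E v w -> exists y, E w y.
  move=> w /KW [[|n] Hn]; first by rewrite -(W_inv0 Hn); exists u.
  have [y [Ewy _]] := W_inv (W_rev Esym Hn); by exists y.
case: (boolP (odd d)) => Hodd; last first.
  have [j Hj] : exists j, d = 2 * j.
    exists d./2; rewrite -{1}(odd_double_half d) (negbTE Hodd) add0n -mul2n //.
  have loop : forall w, Defs.comp E v w -> E w w.
    move=> w /nb [y Ewy]; apply: H; rewrite Hj.
    exact: (W_bounce Esym (W0 E w) Ewy j).
  apply: nC => x y Kx Ky.
  have [n Hn] := Kxy x y Kx Ky.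
  elim: Hn Kx Ky => [x0 K0 _|k x0 z y0 Exz Wzy IH Kx Ky]; first exact: loop.
  have Kz := comp_step Kx Exz.
  have Ezy := IH Kz Ky.
  apply: H; have -> : d = 2 + (d - 2) by lia.
  apply: W_cat (W_loop (loop _ Ky) _).
  exact: WS Exz (W1 Ezy).
have [j Hj] : exists j, d = 3 + 2 * j.
  have Ed : d = 1 + 2 * d./2 by rewrite -{1}(odd_double_half d) Hodd -mul2n.
  exists (d./2 - 1); lia.
have F1 : forall x y z w, E x y -> E y z -> E z w -> E x w.
  move=> x y z w Exy Eyz Ezw; apply: H; rewrite Hj.
  have Ewz : E w z by rewrite Esym.
  exact: (W_bounce Esym (WS Exy (WS Eyz (W1 Ezw))) Ewz j).
case: (classic (exists w, Defs.comp E v w /\ E w w)) => [[w [Kw Eww]]|noloop].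
  have Ew : forall n x, W E n x w -> E w x.
    have gen : forall n x z, W E n x z -> z = w -> E w x.
      move=> n x z; elim=> [x0 ->|k x0 y0 z0 Exy Wyz IH ez] //.
      subst z0; have Ewy := IH (erefl _).
      apply: H; have -> : d = (d - 2) + 2 by lia.
      apply: W_cat (W_loop Eww _) _.
      apply: WS Ewy (W1 _); by rewrite Esym.
    by move=> n x Hx; apply: gen Hx _.
  apply: nC => x y Kx Ky.
  have [n1 H1] := Kxy x w Kx Kw; have [n2 H2] := Kxy y w Ky Kw.
  have Ewx := Ew _ _ H1; have Ewy := Ew _ _ H2.
  apply: H; have -> : d = 1 + ((d - 2) + 1) by lia.
  apply: W_cat (W1 _) (W_cat (W_loop Eww _) (W1 Ewy)).
  by rewrite Esym.
apply: nB.
have oddE : forall k x y, W E (2 * k + 1) x y -> E x y by move=> k x y Hk; exact: (W_odd_edge F1 Hk).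
exists (fun x => exists k, W E (2 * k) v x), (fun x => exists k, W E (2 * k + 1) v x).
split; first by exists v, 0; apply: W0.
split; first by exists u, 0; apply: W1.
split.
  move=> x [[k Hk] [l Hl]].
  apply: noloop; exists x; split; first exact: WK Hl.
  apply: (oddE (k + l)); apply: W_eq (W_cat (W_rev Esym Hk) Hl); lia.
split.
  move=> x; split.
  - move/KW => [n Hn]; case: (boolP (odd n)) => Ho.
    + right; exists n./2; apply: W_eq Hn.
      by rewrite -{1}(odd_double_half n) Ho -mul2n addnC.
    + left; exists n./2; apply: W_eq Hn.
      by rewrite -{1}(odd_double_half n) (negbTE Ho) -mul2n.
  - by move=> [[k Hk]|[k Hk]]; apply: WK Hk.
move=> x y Kx Ky; split.
- move=> Exy; have [n Hn] := KW x Kx; case: (boolP (odd n)) => Ho.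
  + right; split.
      exists n./2; apply: W_eq Hn.
      by rewrite -{1}(odd_double_half n) Ho -mul2n addnC.
    exists (n./2).+1; apply: W_eq (W_cat Hn (W1 Exy)).
    by rewrite -{1}(odd_double_half n) Ho -mul2n; lia.
  + left; split.
      exists n./2; apply: W_eq Hn.
      by rewrite -{1}(odd_double_half n) (negbTE Ho) -mul2n.
    exists n./2; apply: W_eq (W_cat Hn (W1 Exy)).
    by rewrite -{1}(odd_double_half n) (negbTE Ho) -mul2n; lia.
- move=> [[[k Hk] [l Hl]]|[[l Hl] [k Hk]]].
  + apply: (oddE (k + l)); apply: W_eq (W_cat (W_rev Esym Hk) Hl); lia.
  + apply: (oddE (k + l)); apply: W_eq (W_cat (W_rev Esym Hl) Hk); lia.
Qed.

Lemma part3_key V (E : V -> V -> bool)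
  (Hw : forall m d, 1 < d -> exists g : nat -> V,
        (forall k, E (g k) (g k.+1)) /\ ~ E (g m) (g (m + d)))
  t t' n i : leaves t = n -> leaves t' = n -> i < n ->
  (forall j, j < i -> depth t j = depth t' j) -> depth t' i < depth t i ->
  ~ satisfies E t t'.
Proof.
move=> Hn Hn' Hi Hj Hlt S.
have Hi0 : 0 < i.
  case: i Hi Hj Hlt => // _ _; by rewrite !depth0.
have Hp := @par_lt t' i ltac:(lia).
have Dp' := @depth_par t' i ltac:(lia).
have Dp := Hj _ Hp.
have [g [Hg nE]] := Hw (depth t (par t' i)) (depth t i - depth t (par t' i)) ltac:(lia).
have [G _] := sat_iff E Hn Hn'.
have := (G S (fun j => g (depth t j))).1.
have Eq : depth t (par t' i) + (depth t i - depth t (par t' i)) = depth t i by lia.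
rewrite Eq in nE.
move=> H; apply: nE.
have := H _ i ltac:(lia); rewrite !add0n; apply.
move=> j Hj'; rewrite !add0n (depth_par Hj'); exact: Hg.
Qed.

Lemma Wp_eq V (E : V -> V -> bool) d d' x y :
  (d == 0) = (d' == 0) -> odd d = odd d' -> Wp E d x y = Wp E d' x y.
Proof. by rewrite /Wp => -> ->. Qed.

Theorem proposition7p1 (V : Type) (E : V -> V -> bool)
    (Esym : forall x y, E x y = E y x) :
  (case_i E ->
     forall (n : nat) (t t' : bterm), leaves t = n -> leaves t' = n ->
       satisfies E t t') /\
  (case_ii E ->
     forall (n : nat) (t t' : bterm), leaves t = n -> leaves t' = n -> t <> t' ->
       (satisfies E t t' <-> ~~ odd (Mtt n t t'))) /\
  (~ case_i E -> ~ case_ii E ->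
     forall (n : nat) (t t' : bterm), leaves t = n -> leaves t' = n -> t <> t' ->
       ~ satisfies E t t').
Proof.
split; [|split].
- move=> Ci n t t' Hn Hn'.
  have Etr := case_i_trans Ci.
  apply/(sat_iff E Hn Hn') => a.
  rewrite (good_trans Esym Etr) (good_trans Esym Etr) Hn Hn' //.
- move=> Cii n t t' Hn Hn' _.
  have F1 := case_ii_F1 Cii.
  rewrite Mtt_even (sat_iff E Hn Hn'); split.
  + move=> S i Hi.
    have [_ [v [A [B [[a0 Aa0] [[b0 Bb0] [Dis [HK HE]]]]]]]] := Cii.
    have Ka0 : Defs.comp E v a0 by apply/HK; left.
    have Kb0 : Defs.comp E v b0 by apply/HK; right.
    have Eab : E a0 b0 by apply/HE => //; left.
    have nEa : ~ E a0 a0 by move/(HE _ _ Ka0 Ka0) => [[_ ?]|[? _]]; apply: (Dis a0).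
    have nEb : ~ E b0 b0 by move/(HE _ _ Kb0 Kb0) => [[? _]|[_ ?]]; apply: (Dis b0).
    have nab : a0 <> b0 by move=> e; apply: (Dis a0); split => //; rewrite e.
    pose f d := if odd d then b0 else a0.
    have Gt : goodP E t 0 (fun j => f (depth t j)).
      move=> j Hj; rewrite !add0n (depth_par Hj) /f /=.
      by case: (odd _) => //=; rewrite Esym.
    have Gt' := (S _).1 Gt.
    have claim : forall j, j < n -> f (depth t j) = f (depth t' j).
      elim/ltn_ind => j IH Hj.
      case: j IH Hj => [|j] IH Hj; first by rewrite !depth0.
      have Hp := @par_lt t' j.+1 ltac:(lia).
      have := Gt' j.+1 ltac:(lia); rewrite !add0n IH //; last lia.
      rewrite (depth_par (t := t') (i := j.+1)); last lia.
      rewrite /f /=.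
      case: (odd (depth t' _)) => /=; case: (odd (depth t j.+1)) => //=.
    have := claim i Hi; rewrite /f.
    by case: (odd (depth t i)); case: (odd (depth t' i)) => // /esym.
  + move=> Hpar a.
    rewrite (good_Wp Esym F1) (good_Wp Esym F1) Hn Hn'.
    split => H i Hi; have := H i Hi.
    * rewrite (Wp_eq _ _ _ (d' := depth t' i)) ?depth_eq0 ?Hn ?Hn' ?Hpar //.
    * rewrite (Wp_eq _ _ _ (d' := depth t i)) ?depth_eq0 ?Hn ?Hn' ?Hpar //.
- move=> nCi nCii n t t' Hn Hn' Hneq.
  have [v [nT [nC nB]]] : exists v, ~ is_trivial E (Defs.comp E v) /\
      ~ is_complete_loops E (Defs.comp E v) /\ ~ is_complete_bipartite E (Defs.comp E v).
    case: (classic (exists v, ~ (is_trivial E (Defs.comp E v) \/ is_complete_loops E (Defs.comp E v)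
             \/ is_complete_bipartite E (Defs.comp E v)))) => [[v Hv]|Hall].
      by exists v; split; [|split] => H; apply: Hv; tauto.
    have All : forall v, is_trivial E (Defs.comp E v) \/ is_complete_loops E (Defs.comp E v)
             \/ is_complete_bipartite E (Defs.comp E v).
      by move=> v; apply: NNPP => Hv; apply: Hall; exists v.
    have [v Hv] : exists v, ~ (is_trivial E (Defs.comp E v) \/ is_complete_loops E (Defs.comp E v)).
      by apply: NNPP => H; apply: nCi => v; apply: NNPP => Hv; apply: H; exists v.
    exists v; split; [|split] => H; apply: Hv; try tauto.
    by exfalso; apply: nCii; split => //; exists v.
  have Hw : forall m d, 1 < d -> exists g : nat -> V,
        (forall k, E (g k) (g k.+1)) /\ ~ E (g m) (g (m + d)).
    move=> m d Hd.
    have [x [y [Wxy nE]]] := walk_exists Esym nT nC nB Hd.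
    have [g [Hg [g0 gd]]] := walk_inf Esym (ltnW Hd) Wxy.
    have [g' [Hg' Hs]] := walk_shift Esym m Hg.
    exists g'; split => //; have := Hs 0; rewrite addn0 => ->; by rewrite Hs g0 gd.
  have Hex : exists i, (i < n) && (depth t i != depth t' i).
    apply: NNPP => H; apply: Hneq; apply: depth_inj; first by rewrite Hn Hn'.
    move=> i Hi; apply: NNPP => Hd; apply: H; exists i.
    by rewrite -Hn Hi; apply/eqP.
  case: (ex_minnP Hex) => m /andP [Hm Hdm] Hmin.
  have Hj : forall j, j < m -> depth t j = depth t' j.
    move=> j Hj; apply/eqP; apply: NNPP => Hd.
    have := Hmin j; rewrite (ltn_trans Hj Hm) /=.
    move/(_ (introT negP Hd)); lia.
  case: (ltngtP (depth t m) (depth t' m)) => Hc; last by rewrite Hc eqxx in Hdm.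
  + move=> S; apply: (part3_key Hw Hn' Hn Hm _ Hc).
      by move=> j Hj'; rewrite Hj.
    by move=> b; rewrite S.
  + exact: (part3_key Hw Hn Hn' Hm Hj Hc).
Qed.
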